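(* Let $W$ be a cocompact discrete reflection group of a CAT(0) space $X$, let $C$ be a chamber, and let $S$ be a minimal subset of the set $R$ of reflections in $W$ such that $C=\bigcap_{s\in S}X_s^+$, so that $(W,S)$ is a Coxeter system. Let $T\subset S$. Then $wX_s^+=X^+_{wsw^{-1}}$ for every $w\in W_T$ and every $s\in S\setminus T$.
   Context: An isometry $r$ of a geodesic space $X$ is a reflection if $r^2=\mathrm{id}$, the fixed-point set $F_r$ (the wall of $r$) has empty interior, $X\setminus F_r$ has exactly two convex connected components, and $r$ interchanges them. A reflection group is an isometry group generated by reflections. Let $W$ be a reflection group of $X$ acting properly (i.e. $\{\gamma\in W: \gamma x\in B(x,N)\}$ is finite for all $x\in X$, $N>0$), and $R$ the set of all reflections of $X$ lying in $W$. A chamber is a connected component $C$ of $X\setminus\bigcup_{r\in R}F_r$. $W$ is a cocompact discrete reflection group if $\overline{C}$ is compact and $\{\gamma\in W: \gamma C=C\}=\{1\}$. For $r\in R$, $X_r^+$ denotes the component of $X\setminus F_r$ containing $C$, and $X_r^-$ the other one. $S\subset R$ is minimal with $C=\bigcap_{s\in S}X_s^+$ (i.e. no proper subset has this property); then $S$ generates $W$ and $(W,S)$ is a Coxeter system. For $T\subset S$, $W_T$ is the subgroup of $W$ generated by $T$ (a parabolic subgroup). $\ell$ denotes word length with respect to $S$. *)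

(* Defs.v *)
From HB Require Import structures.
From mathcomp Require Import all_boot all_order all_algebra.
From mathcomp Require Import all_classical all_reals all_analysis.
Set Implicit Arguments. Unset Strict Implicit. Unset Printing Implicit Defensive.
Import Order.TTheory GRing.Theory Num.Theory.
Local Open Scope classical_set_scope.
Local Open Scope ring_scope.

Section Geometry.
Variables (R : realType) (X : metricType R).

Local Notation d := (@mdist R X).

Definition geodesic (x y : X) (g : R -> X) : Prop :=
  g 0 = x /\ g (d x y) = y /\
  forall s t, 0 <= s <= d x y -> 0 <= t <= d x y -> d (g s) (g t) = `|s - t|.

Definition geodesic_space : Prop := forall x y : X, exists g, geodesic x y g.

Definition edist (P Q : R * R) : R :=
  Num.sqrt ((P.1 - Q.1) ^+ 2 + (P.2 - Q.2) ^+ 2).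

(* the point at distance t from P on the segment [P, Q] of length L *)
Definition seg_pt (P Q : R * R) (L t : R) : R * R :=
  ((1 - t / L) * P.1 + (t / L) * Q.1, (1 - t / L) * P.2 + (t / L) * Q.2).

Definition vert3 {T : Type} (a b c : T) (i : nat) : T :=
  match i with 0%N => a | 1%N => b | _ => c end.

(* CAT(0): geodesic, and every geodesic triangle (p,q,r) with sides g k
   (side k goes from vert3 p q r k to vert3 q r p k) satisfies the CAT(0)
   inequality with respect to any comparison triangle (P,Q,Q') in E^2. *)
Definition CAT0 : Prop :=
  geodesic_space /\
  forall (p q r : X) (g : 'I_3 -> R -> X),
    (forall k : 'I_3, geodesic (vert3 p q r k) (vert3 q r p k) (g k)) ->
  forall P Q Q' : R * R,
    edist P Q = d p q -> edist Q Q' = d q r -> edist Q' P = d r p ->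
  forall (k l : 'I_3) (t s : R),
    0 <= t <= d (vert3 p q r k) (vert3 q r p k) ->
    0 <= s <= d (vert3 p q r l) (vert3 q r p l) ->
    d (g k t) (g l s) <=
    edist (seg_pt (vert3 P Q Q' k) (vert3 Q Q' P k) (d (vert3 p q r k) (vert3 q r p k)) t)
          (seg_pt (vert3 P Q Q' l) (vert3 Q Q' P l) (d (vert3 p q r l) (vert3 q r p l)) s).

Definition isometric (f : X -> X) : Prop := forall x y, d (f x) (f y) = d x y.

Definition convex (A : set X) : Prop :=
  forall x y g, A x -> A y -> geodesic x y g ->
    forall t, 0 <= t <= d x y -> A (g t).

Definition components (A : set X) : set (set X) :=
  [set Z | exists x, A x /\ Z = connected_component A x].

Definition fixset (r : X -> X) : set X := [set x | r x = x].

Definition reflection (r : X -> X) : Prop :=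
  isometric r /\ r \o r = id /\
  interior (fixset r) = set0 /\
  exists P Q : set X, P <> Q /\
    components (~` fixset r) = [set Z | Z = P \/ Z = Q] /\
    convex P /\ convex Q /\ r @` P = Q /\ r @` Q = P.

Inductive gen (T : set (X -> X)) : (X -> X) -> Prop :=
| gen_id : gen T id
| gen_gen t : T t -> gen T t
| gen_comp f g : gen T f -> gen T g -> gen T (f \o g)
| gen_inv f g : gen T f -> f \o g = id -> g \o f = id -> gen T g.

Definition reflections_in (W : set (X -> X)) : set (X -> X) :=
  [set r | W r /\ reflection r].

Definition reflection_group (W : set (X -> X)) : Prop :=
  W = gen (reflections_in W).

Definition acts_properly (W : set (X -> X)) : Prop :=
  forall (x : X) (N : R), 0 < N -> finite_set [set g | W g /\ d x (g x) < N].

Definition chamber (W : set (X -> X)) (C : set X) : Prop :=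
  components (~` \bigcup_(r in reflections_in W) fixset r) C.

Definition cocompact_discrete (W : set (X -> X)) (C : set X) : Prop :=
  compact (closure C) /\ [set g | W g /\ g @` C = C] = [set id].

Definition Xplus (C : set X) (r : X -> X) : set X :=
  [set x | exists c, C c /\ connected_component (~` fixset r) c x].

Definition minimal_chamber_walls (W : set (X -> X)) (C : set X) (S : set (X -> X)) : Prop :=
  S `<=` reflections_in W /\
  C = \bigcap_(s in S) Xplus C s /\
  forall S', S' `<=` S -> S' <> S -> C <> \bigcap_(s in S') Xplus C s.

End Geometry.

(* Main.v *)
Require Import Defs.
From HB Require Import structures.
From mathcomp Require Import all_boot all_order all_algebra.
From mathcomp Require Import all_classical all_reals all_analysis.
From mathcomp Require Import lra zify.
Set Implicit Arguments. Unset Strict Implicit. Unset Printing Implicit Defensive.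
Import Order.TTheory GRing.Theory Num.Theory numFieldNormedType.Exports.
Local Open Scope classical_set_scope.
Local Open Scope ring_scope.
Local Notation fixset := Defs.fixset.


Section Basics.
Context {R : realType} {X : metricType R}.
Local Notation d := (@mdist R X).

Lemma mballE (x y : X) e : ball x e y <-> d x y < e.
Proof. by rewrite ballEmdist. Qed.

Definition clamp (L s : R) : R := if s <= 0 then 0 else if L <= s then L else s.

Lemma clamp_lip L x y : 0 <= L -> `|clamp L x - clamp L y| <= `|x - y|.
Proof.
move=> L0; have h1 := ler_norm (x - y); have h2 := ler_norm (y - x).
rewrite distrC in h2.
rewrite ler_norml /clamp.
have [hx|hx] := leP x 0; have [hLx|hLx] := leP L x;
have [hy|hy] := leP y 0; have [hLy|hLy] := leP L y; apply/andP; split; lra.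
Qed.

Lemma clamp_id L s : 0 <= s <= L -> clamp L s = s.
Proof.
move=> /andP[s0 sL]; rewrite /clamp; case: ifP => h1.
  by apply/eqP; rewrite eq_le h1 s0.
by case: ifP => h2 //; apply/eqP; rewrite eq_le h2 sL.
Qed.

Lemma clamp_in L s : 0 <= L -> 0 <= clamp L s <= L.
Proof.
move=> L0; rewrite /clamp; have [hx|hx] := leP s 0; have [hLx|hLx] := leP L s;
apply/andP; split; lra.
Qed.


Lemma geo_dist x y g s : geodesic x y g -> 0 <= s <= d x y -> d x (g s) = s.
Proof.
move=> [g0 [gL gd]] hs; have := gd 0 s; rewrite g0 => ->//; last first.
  by rewrite lexx mdist_ge0.
by rewrite sub0r normrN ger0_norm //; case/andP: hs.
Qed.

Definition I01 (L : R) : set R := [set t | 0 <= t <= L].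

Lemma I01_connected L : connected (I01 L).
Proof.
apply/connected_intervalP.
have -> : I01 L = [set` `[0, L]] by apply/seteqP; split=> t; rewrite /= in_itv.
exact: interval_is_interval.
Qed.

Lemma seg_connected x y g : geodesic x y g -> connected (g @` I01 (d x y)).
Proof.
move=> hg; have [g0 [gL gd]] := hg; set L := d x y.
have L0 : 0 <= L by apply: mdist_ge0.
pose gc := g \o clamp L.
have gcc : continuous gc.
  move=> t; apply/cvg_ballP => eps e0.
  have := @nbhsx_ballx _ _ t eps e0; apply: filterS => u.
  rewrite /ball /= => tu; apply/mballE; rewrite /gc /= gd ?clamp_in //.
  exact: le_lt_trans (clamp_lip _ _ L0) tu.
have -> : g @` I01 L = gc @` I01 L.
  apply/seteqP; split=> z [t ht <-]; exists t => //; rewrite /gc /= clamp_id //.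
apply: connected_continuous_connected; first exact: I01_connected.
exact: continuous_subspaceT.
Qed.

Lemma seg_ends x y g : geodesic x y g -> (g @` I01 (d x y)) x /\ (g @` I01 (d x y)) y.
Proof.
move=> [g0 [gL gd]]; have L0 := mdist_ge0 x y; split.
  by exists 0 => //; rewrite /I01 /= lexx L0.
by exists (d x y) => //; rewrite /I01 /= lexx L0.
Qed.

Lemma seg_ball x y g z : geodesic x y g -> (g @` I01 (d x y)) z -> d x z <= d x y.
Proof.
move=> hg [t ht <-]; rewrite (geo_dist hg ht); by case/andP: ht.
Qed.

End Basics.


Section CC.
Variables (R : realType) (X : metricType R).
Local Notation d := (@mdist R X).
Hypothesis hgeo : geodesic_space X.

Lemma cc_ball (A : set X) (x y : X) e : (forall z, d y z < e -> A z) -> connected_component A x y ->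
  forall z, d y z < e -> connected_component A x z.
Proof.
move=> hA hxy z hz; have [g hg] := hgeo y z.
have [sy sz] := seg_ends hg.
rewrite (same_connected_component hxy).
apply: (connected_component_max sy) => //; last exact: seg_connected hg.
move=> w hw; apply: hA; exact: le_lt_trans (seg_ball hg hw) hz.
Qed.

Lemma open_ballP (A : set X) : open A <-> forall x, A x -> exists2 e, 0 < e & forall z, d x z < e -> A z.
Proof.
rewrite openE; split=> [h x Ax|h x Ax].
  have /nbhs_ballP[e e0 he] := h x Ax; exists e => // z hz; apply: he; exact/mballE.
have [e e0 he] := h x Ax; apply/nbhs_ballP; exists e => // z /mballE; exact: he.
Qed.

Lemma cc_open (A : set X) (x : X) : open A -> open (connected_component A x).
Proof.
move=> /open_ballP oA; apply/open_ballP => y hy.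
have [e e0 he] := oA y (connected_component_sub hy).
by exists e => //; exact: cc_ball he hy.
Qed.

End CC.


Lemma fin_min_nat (R : realType) (T : Type) (P : T -> Prop) (f : T -> R) (g : nat -> T) n :
  (forall i, (i < n)%N -> P (g i) -> 0 < f (g i)) ->
  exists2 e, 0 < e & forall i, (i < n)%N -> P (g i) -> e <= f (g i).
Proof.
elim: n => [|n IH] h; first by exists 1 => //.
have [e e0 he] : exists2 e, 0 < e & forall i, (i < n)%N -> P (g i) -> e <= f (g i).
  by apply: IH => i lin; apply: h; exact: ltnW.
case: (pselect (P (g n))) => Pn.
  have fn := h n (ltnSn n) Pn.
  exists (Num.min e (f (g n))); first by rewrite lt_min e0 fn.
  move=> i; rewrite ltnS leq_eqVlt => /orP[/eqP -> _|lin Pi]; first by rewrite ge_min lexx orbT.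
  by rewrite ge_min he.
exists e => // i; rewrite ltnS leq_eqVlt => /orP[/eqP -> //|]; exact: he.
Qed.

Lemma fin_min (R : realType) (T : Type) (A : set T) (P : T -> Prop) (f : T -> R) :
  finite_set A -> (forall a, A a -> P a -> 0 < f a) ->
  exists2 e, 0 < e & forall a, A a -> P a -> e <= f a.
Proof.
move=> /finite_set_leP [n] /pfcard_geP [->|]; first by exists 1.
move=> /surjfunPex [g Ag] h.
case: (@fin_min_nat R T P f g n) => [i lin|e e0 he].
  by apply: h; rewrite Ag; exists i.
exists e => // a; rewrite Ag => -[i lin <-]; exact: he.
Qed.


Section Iso.
Context {R : realType} {X : metricType R}.
Local Notation d := (@mdist R X).

Definition ibij (g g' : X -> X) := isometric g /\ g \o g' = id /\ g' \o g = id.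

Lemma ibijK1 g g' x : ibij g g' -> g (g' x) = x.
Proof. by move=> [_ [h _]]; have := congr1 (fun f => f x) h. Qed.
Lemma ibijK2 g g' x : ibij g g' -> g' (g x) = x.
Proof. by move=> [_ [_ h]]; have := congr1 (fun f => f x) h. Qed.

Lemma ibij_sym g g' : ibij g g' -> ibij g' g.
Proof.
move=> h; have [hi [h1 h2]] := h; split; last by split.
by move=> x y; rewrite -hi !(ibijK1 _ h).
Qed.

Lemma ibij_comp g g' h h' : ibij g g' -> ibij h h' -> ibij (g \o h) (h' \o g').
Proof.
move=> Hg Hh; split; first by move=> x y /=; rewrite Hg.1 Hh.1.
split; apply/funext => x /=; first by rewrite (ibijK1 _ Hh) (ibijK1 _ Hg).
by rewrite (ibijK2 _ Hg) (ibijK2 _ Hh).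
Qed.

Lemma ibij_id : ibij id id.
Proof. by split. Qed.

Lemma iso_cont (g : X -> X) : isometric g -> continuous g.
Proof.
move=> hg x; apply/cvg_ballP => e e0.
have := @nbhsx_ballx _ _ x e e0; apply: filterS => y /mballE hy.
by apply/mballE; rewrite hg.
Qed.

Lemma img_img g g' (A : set X) : ibij g g' -> g' @` (g @` A) = A.
Proof.
move=> h; apply/seteqP; split=> [_ [_ [x Ax <-] <-]|x Ax]; first by rewrite (ibijK2 _ h).
by exists (g x); [exists x|rewrite (ibijK2 _ h)].
Qed.

Lemma img_mem g g' (A : set X) y : ibij g g' -> (g @` A) y <-> A (g' y).
Proof.
move=> h; split=> [[x Ax <-]|Ay]; first by rewrite (ibijK2 _ h).
by exists (g' y) => //; rewrite (ibijK1 _ h).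
Qed.

Lemma img_compl g g' (A : set X) : ibij g g' -> g @` (~` A) = ~` (g @` A).
Proof.
move=> h; apply/seteqP; split=> y.
  by move=> /(img_mem _ _ h) nA /(img_mem _ _ h).
by move=> nA; apply/(img_mem _ _ h) => Ay; apply: nA; apply/(img_mem _ _ h).
Qed.

Lemma img_cc g g' (A : set X) x : ibij g g' ->
  g @` connected_component A x = connected_component (g @` A) (g x).
Proof.
move=> h; have hs := ibij_sym h.
have sub : forall f f' (B : set X) z, ibij f f' ->
    f @` connected_component B z `<=` connected_component (f @` B) (f z).
  move=> f f' B z hf; case: (pselect (B z)) => Bz; last first.
    by rewrite connected_component_out // image_set0.
  apply: connected_component_max.
  - by exists z => //; exact: connected_component_refl.
  - by move=> _ [w hw <-]; exists w => //; exact: connected_component_sub hw.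
  apply: connected_continuous_connected; first exact: component_connected.
  by apply: continuous_subspaceT; apply: iso_cont; case: hf.
apply/seteqP; split; first exact: sub h.
move=> y hy; apply/(img_mem _ _ h).
have := sub g' g (g @` A) (g x) hs (g' y); rewrite (img_img A h) (ibijK2 _ h).
by apply; exists y.
Qed.

Lemma img_comp (g h : X -> X) (A : set X) : (g \o h) @` A = g @` (h @` A).
Proof. by rewrite image_comp. Qed.

Lemma fix_conj g g' r : ibij g g' -> fixset (g \o r \o g') = g @` fixset r.
Proof.
move=> h; apply/seteqP; split=> y.
  by rewrite /fixset /= => e; apply/(img_mem _ _ h); rewrite /= -{2}e (ibijK2 _ h).
by move=> /(img_mem _ _ h); rewrite /fixset /= => ->; rewrite (ibijK1 _ h).
Qed.

End Iso.


Section Refl.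
Context {R : realType} {X : metricType R}.
Local Notation d := (@mdist R X).

Lemma interior_ballP (A : set X) x :
  interior A x <-> exists2 e, 0 < e & forall z, d x z < e -> A z.
Proof.
rewrite /interior; split=> [/nbhs_ballP[e e0 he]|[e e0 he]].
  by exists e => // z hz; apply: he; exact/mballE.
by apply/nbhs_ballP; exists e => // z /mballE; exact: he.
Qed.

Lemma comps_img g g' (A : set X) : ibij g g' ->
  components (g @` A) = (fun Z => g @` Z) @` components A.
Proof.
move=> h; apply/seteqP; split=> Z.
  move=> [y [/(img_mem _ _ h) Ay ->]]; exists (connected_component A (g' y)).
    by exists (g' y).
  by rewrite (img_cc _ _ h) (ibijK1 _ h).
move=> [_ [x [Ax ->]] <-]; exists (g x); split; first by exists x.
exact: (img_cc _ _ h).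
Qed.

Lemma convex_img g g' (P : set X) : ibij g g' -> convex P -> convex (g @` P).
Proof.
move=> h cP x y ga /(img_mem _ _ h) Px /(img_mem _ _ h) Py [ga0 [gaL gad]] t ht.
have hs := ibij_sym h; have [ig' _] := hs.
apply/(img_mem _ _ h); apply: (cP (g' x) (g' y) (g' \o ga)) => //; last by rewrite ig'.
split; first by rewrite /= ga0.
rewrite ig' /= gaL; split => // s u hs' hu; rewrite /= ig'; exact: gad.
Qed.

Lemma reflK (r : X -> X) x : reflection r -> r (r x) = x.
Proof. by move=> [_ [h _]]; have := congr1 (fun f => f x) h. Qed.

Lemma refl_conj (g g' r : X -> X) : ibij g g' -> reflection r -> reflection (g \o r \o g').
Proof.
move=> h hr; have hr' := hr; have [ir [rr [intF [P [Q [PQ [cF [cP [cQ [rP rQ]]]]]]]]]] := hr'.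
have [ig _] := h.
split; first by move=> x y /=; rewrite ig ir (ibij_sym h).1.
split; first by apply/funext => x /=; rewrite (ibijK2 _ h) (reflK _ hr) (ibijK1 _ h).
split.
  rewrite (fix_conj r h); apply/seteqP; split=> // x /interior_ballP[e e0 he].
  suff : interior (fixset r) (g' x) by rewrite intF.
  apply/interior_ballP; exists e => // z hz.
  have : d x (g z) < e by rewrite -[X in d X _](ibijK1 x h) ig.
  by move=> /he /(img_mem _ _ h); rewrite (ibijK2 _ h).
exists (g @` P), (g @` Q); split.
  by move=> e; apply: PQ; rewrite -(img_img P h) e img_img.
split.
  rewrite (fix_conj r h) -(img_compl _ h) (comps_img _ h) cF.
  apply/seteqP; split=> Z.
    by case=> Z' [] -> <-; [left|right].
  by case=> ->; [exists P; [left|]|exists Q; [right|]].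
split; first exact: convex_img h cP.
split; first exact: convex_img h cQ.
by split; rewrite img_comp img_comp (img_img _ h) ?rP ?rQ.
Qed.

End Refl.


Section Group.
Context {R : realType} {X : metricType R}.
Local Notation d := (@mdist R X).
Variable W : set (X -> X).
Hypothesis hW : reflection_group W.

Lemma W_inv g : W g -> exists2 g', W g' & ibij g g'.
Proof.
rewrite hW; elim=> {g}.
- by exists id; [exact: gen_id|exact: ibij_id].
- move=> t [Wt rt]; exists t; first exact: gen_gen.
  by have [it [tt _]] := rt; split.
- move=> f g _ [f' Wf' hf] _ [g' Wg' hg]; exists (g' \o f'); first exact: gen_comp.
  exact: ibij_comp.
- move=> f g Wf [f' _ hf] fg gf; exists f => //.
  have -> : g = f'.
    apply/funext => x; rewrite -[g x](ibijK2 _ hf) /=.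
    by have := congr1 (fun h => h x) fg => /= ->.
  exact: ibij_sym.
Qed.

Lemma W_comp f g : W f -> W g -> W (f \o g).
Proof. by rewrite hW; exact: gen_comp. Qed.

Lemma W_refl r : reflections_in W r -> W r.
Proof. by case. Qed.

Lemma W_conj g g' r : W g -> W g' -> ibij g g' -> reflections_in W r ->
  reflections_in W (g \o r \o g').
Proof.
move=> Wg Wg' h [Wr rr]; split; last exact: refl_conj.
by apply: W_comp => //; apply: W_comp.
Qed.

Definition Walls := \bigcup_(r in reflections_in W) fixset r.
Definition Free := ~` Walls.

Lemma Free_img g g' : W g -> W g' -> ibij g g' -> g @` Free = Free.
Proof.
have sub : forall f f', W f -> W f' -> ibij f f' -> f @` Free `<=` Free.
  move=> f f' Wf Wf' hf _ [x Fx <-] [r rr frx]; apply: Fx.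
  exists (f' \o r \o f); first by apply: W_conj => //; exact: ibij_sym.
  by rewrite /fixset /= frx (ibijK2 _ hf).
move=> Wg Wg' h; apply/seteqP; split; first exact: sub h.
move=> x Fx; exists (g' x); last exact: ibijK1 _ h.
by apply: (sub g' g Wg' Wg (ibij_sym h)); exists x.
Qed.

End Group.


Section Refl2.
Context {R : realType} {X : metricType R}.

Lemma refl_ibij (r : X -> X) : reflection r -> ibij r r.
Proof. by move=> [ir [rr _]]; split. Qed.

Lemma refl_fix_img (r : X -> X) : reflection r -> r @` fixset r = fixset r.
Proof.
move=> hr; apply/seteqP; split=> [_ [x fx <-]|x fx]; first by rewrite /fixset /= fx fx.
by exists x.
Qed.

Lemma refl_free_img (r : X -> X) : reflection r -> r @` (~` fixset r) = ~` fixset r.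
Proof. by move=> hr; rewrite (img_compl _ (refl_ibij hr)) refl_fix_img. Qed.

Lemma refl_cc_img (r : X -> X) y : reflection r ->
  r @` connected_component (~` fixset r) y = connected_component (~` fixset r) (r y).
Proof. by move=> hr; rewrite (img_cc _ _ (refl_ibij hr)) refl_free_img. Qed.

Lemma refl_comp_mem (r : X -> X) y : reflection r -> ~ fixset r y ->
  exists P Q : set X, [/\ P <> Q, r @` P = Q, r @` Q = P &
     connected_component (~` fixset r) y = P].
Proof.
move=> hr ny; have [_ [_ [_ [P [Q [PQ [cF [cP [cQ [rP rQ]]]]]]]]]] := hr.
have : components (~` fixset r) (connected_component (~` fixset r) y) by exists y.
rewrite cF => -[->|->]; first by exists P, Q.
by exists Q, P; split => //; exact/nesym.
Qed.

Lemma refl_swap (r : X -> X) y : reflection r -> ~ fixset r y ->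
  connected_component (~` fixset r) (r y) <> connected_component (~` fixset r) y.
Proof.
move=> hr ny; have [P [Q [PQ rP rQ e]]] := refl_comp_mem hr ny.
by rewrite -refl_cc_img // e rP => /esym.
Qed.

Lemma refl_two (r : X -> X) y z : reflection r -> ~ fixset r y -> ~ fixset r z ->
  connected_component (~` fixset r) z = connected_component (~` fixset r) y \/
  connected_component (~` fixset r) z = connected_component (~` fixset r) (r y).
Proof.
move=> hr ny nz; rewrite -refl_cc_img //.
have [_ [_ [_ [P [Q [PQ [cF [cP [cQ [rP rQ]]]]]]]]]] := hr.
have : components (~` fixset r) (connected_component (~` fixset r) y) by exists y.
have : components (~` fixset r) (connected_component (~` fixset r) z) by exists z.
rewrite cF => -[]-> -[]->.
- by left.
- by right.
- by right.
- by left.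
Qed.

End Refl2.

Section Refl3.
Context {R : realType} {X : metricType R}.

Lemma refl_comp_convex (r : X -> X) y : reflection r -> ~ fixset r y ->
  convex (connected_component (~` fixset r) y).
Proof.
move=> hr ny; have [_ [_ [_ [P [Q [PQ [cF [cP [cQ [rP rQ]]]]]]]]]] := hr.
have : components (~` fixset r) (connected_component (~` fixset r) y) by exists y.
by rewrite cF => -[]->.
Qed.

Lemma refl_not_id (r : X -> X) (x : X) : reflection r -> r <> id.
Proof.
move=> [_ [_ [intF _]]] rid; suff : (fixset r)° x by rewrite intF.
have -> : fixset r = setT by apply/seteqP; split => // y _; rewrite /fixset rid.
by rewrite interiorT.
Qed.

End Refl3.


Section Main.
Context {R : realType} {X : metricType R}.
Local Notation d := (@mdist R X).
Variables (W : set (X -> X)) (C : set X) (S : set (X -> X)).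
Hypotheses (hgeo : geodesic_space X) (hW : reflection_group W)
  (hprop : acts_properly W) (hch : chamber W C) (hcd : cocompact_discrete W C)
  (hmin : minimal_chamber_walls W C S).

Lemma near_avoid x (Q : (X -> X) -> Prop) :
  (forall r, Q r -> W r /\ isometric r /\ r x <> x) ->
  exists2 e, 0 < e & forall r z, Q r -> d x z < e -> r z <> z.
Proof.
move=> hQ; have fin := hprop x (ltr0Sn R 1).
case: (@fin_min R _ _ Q (fun g => d x (g x)) fin) => [a _ Qa|e0 e00 he0].
  rewrite mdist_gt0; apply/eqP => e.
  by have [_ [_]] := hQ a Qa; apply; rewrite -e.
exists (Num.min (e0 / 2) 1); first by rewrite lt_min ltr01 andbT; lra.
move=> r z Qr hz rz; have [Wr [ir nrx]] := hQ r Qr.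
have e1 : Num.min (e0 / 2) 1 <= e0 / 2 by rewrite ge_min lexx.
have e2 : Num.min (e0 / 2) 1 <= 1 by rewrite ge_min lexx orbT.
have tri : d x (r x) <= d x z + d z (r x) := metric_triangle _ _ _.
have dz : d z (r x) = d x z by rewrite -{1}rz ir metric_sym.
have : e0 <= d x (r x) by apply: he0 => //; split => //; lra.
lra.
Qed.

Lemma Free_open : open (Free W).
Proof.
apply/open_ballP => x Fx.
case: (@near_avoid x (reflections_in W)) => [r rr|e e0 he].
  split; first by case: rr.
  split; first by have [_ [ir _]] := rr.
  by move=> rx; apply: Fx; exists r.
exists e => // z hz [r rr rz]; exact: (he r z rr hz rz).
Qed.

Lemma C_def : exists2 c0, Free W c0 & C = connected_component (Free W) c0.
Proof. by have [c0 [Fc0 ->]] := hch; exists c0. Qed.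

Lemma C_cc c : C c -> C = connected_component (Free W) c.
Proof.
have [c0 Fc0 ->] := C_def => hc; exact: same_connected_component.
Qed.

Lemma C_free : C `<=` Free W.
Proof. have [c0 Fc0 ->] := C_def; exact: connected_component_sub. Qed.

Lemma Free_fix r : reflections_in W r -> Free W `<=` ~` fixset r.
Proof. by move=> rr x Fx rx; apply: Fx; exists r. Qed.

Lemma gC_cc g g' c : W g -> W g' -> ibij g g' -> C c ->
  g @` C = connected_component (Free W) (g c).
Proof.
move=> Wg Wg' h hc; rewrite (C_cc hc) (img_cc _ _ h).
by rewrite (Free_img hW Wg Wg' h).
Qed.

Lemma gC_open g g' : W g -> W g' -> ibij g g' -> open (g @` C).
Proof.
move=> Wg Wg' h; have [c0 Fc0 e] := C_def.
have hc : C c0 by rewrite e; exact: connected_component_refl.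
rewrite (gC_cc Wg Wg' h hc); apply: cc_open => //; exact: Free_open.
Qed.

Lemma gC_conn g g' : ibij g g' -> connected (g @` C).
Proof.
move=> h; have [c0 Fc0 ->] := C_def.
apply: connected_continuous_connected; first exact: component_connected.
by apply: continuous_subspaceT; apply: iso_cont; case: h.
Qed.

Lemma gC_free g g' : W g -> W g' -> ibij g g' -> g @` C `<=` Free W.
Proof. by move=> Wg Wg' h; rewrite -(Free_img hW Wg Wg' h); apply: image_subset; exact: C_free. Qed.

Lemma Xplus_cc r c : reflections_in W r -> C c ->
  Xplus C r = connected_component (~` fixset r) c.
Proof.
move=> rr hc; have sub : C `<=` connected_component (~` fixset r) c.
  apply: connected_component_max => //.
    by move=> x /C_free; exact: Free_fix.
  by have := @gC_conn id id ibij_id; rewrite image_id.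
apply/seteqP; split=> [x [c' [hc' hx]]|x hx]; last by exists c.
by rewrite (same_connected_component (sub _ hc')).
Qed.

Lemma stab g : W g -> g @` C = C -> g = id.
Proof.
move=> Wg e; have [_ hs] := hcd.
have : [set g | W g /\ g @` C = C] g by split.
by rewrite hs.
Qed.

Lemma W_id : W id.
Proof. by rewrite hW; exact: gen_id. Qed.

Lemma gC_meet g g' h h' x : W g -> W g' -> ibij g g' -> W h -> W h' -> ibij h h' ->
  (g @` C) x -> (h @` C) x -> g @` C = h @` C.
Proof.
move=> Wg Wg' hg Wh Wh' hh [c hc <-] [c' hc' e].
rewrite (gC_cc Wg Wg' hg hc) (gC_cc Wh Wh' hh hc').
apply/esym/same_connected_component; rewrite e.
rewrite -(gC_cc Wg Wg' hg hc); by exists c.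
Qed.

Lemma GP t : S t -> exists p, exists2 e, 0 < e &
  t p = p /\ forall y, d p y < e -> ~ fixset t y -> C y \/ (t @` C) y.
Proof.
move=> St; have [SW [Ceq Smin]] := hmin.
have tr := SW t St; have [_ ht] := tr.
have [c0 Fc0 Ce] := C_def.
have hc0 : C c0 by rewrite Ce; exact: connected_component_refl.
pose S' := S `\ t.
have S'S : S' `<=` S by move=> r [].
have S'n : S' <> S by move=> e; move: St; rewrite -e => -[_ /(_ erefl)].
have hneq := Smin S' S'S S'n.
have : exists x, (\bigcap_(r in S') Xplus C r) x /\ ~ C x.
  apply: contrapT => hn; apply: hneq; apply/seteqP; split.
  - move=> x Cx r S'r; exists x; split=> //; apply: connected_component_refl.
    exact: Free_fix (SW r (S'S r S'r)) _ (C_free Cx).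
  - by move=> x hx; apply: contrapT => nC; apply: hn; exists x.
move=> [x [hx nCx]].
have nXt : ~ Xplus C t x.
  move=> hxt; apply: nCx; rewrite Ceq => r Sr.
  case: (pselect (r = t)) => [->//|nrt]; apply: hx; split => //.
have [g hg] := hgeo c0 x.
set Sg := g @` I01 (d c0 x).
have [s0 sx] := seg_ends hg.
have Sgsub : forall r, S' r -> Sg `<=` Xplus C r.
  move=> r S'r; have rr := SW r (S'S r S'r); rewrite (Xplus_cc rr hc0).
  have [_ rref] := rr.
  have nF0 := Free_fix rr (C_free hc0).
  have cv := refl_comp_convex rref nF0.
  move=> _ [u hu <-]; apply: (cv c0 x g) => //.
    exact: connected_component_refl.
  by rewrite -(Xplus_cc rr hc0); exact: hx.
have [p [Sgp Ftp]] : exists p, Sg p /\ fixset t p.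
  apply: contrapT => hn; apply: nXt; rewrite (Xplus_cc tr hc0).
  have sub : Sg `<=` connected_component (~` fixset t) c0.
    apply: connected_component_max => //; last exact: seg_connected hg.
    by move=> y hy fy; apply: hn; exists y.
  exact: sub x sx.
have pS' : forall r, S' r -> Xplus C r p := fun r h => Sgsub r h p Sgp.
case: (@near_avoid p S') => [r S'r|e e0 he].
  have rr := SW r (S'S r S'r); split; first by case: rr.
  split; first by have [_ [ir _]] := rr.
  by have := pS' r S'r; rewrite (Xplus_cc rr hc0) => /connected_component_sub.
exists p, e => //; split => //.
have near : forall z, d p z < e -> forall r, S' r -> Xplus C r z.
  move=> z hz r S'r; have rr := SW r (S'S r S'r).
  have := pS' r S'r; rewrite !(Xplus_cc rr hc0) => hp.
  apply: (cc_ball hgeo _ hp) hz => w hw rw; exact: he r w S'r hw rw.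
have inC : forall z, d p z < e -> Xplus C t z -> C z.
  move=> z hz hzt; rewrite Ceq => r Sr; case: (pselect (r = t)) => [->//|nrt].
  by apply: (near z hz r); split.
move=> y hy nFy.
case: (pselect (Xplus C t y)) => hyt; first by left; exact: inC.
right.
have [it _] := ht.
have ty_d : d p (t y) < e by have := it p y; rewrite Ftp => ->.
have : Xplus C t (t y).
  rewrite (Xplus_cc tr hc0) in hyt *.
  have nF0 := Free_fix tr (C_free hc0).
  case: (refl_two ht nF0 nFy) => ey.
    by exfalso; apply: hyt; rewrite -ey; exact: connected_component_refl.
  have e2 : connected_component (~` fixset t) (t y) = connected_component (~` fixset t) c0.
    by rewrite -refl_cc_img // ey refl_cc_img // reflK.
  rewrite -e2; apply: connected_component_refl => fty; apply: nFy.
  have fty' : t (t y) = t y := fty; rewrite (reflK _ ht) in fty'.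
  by rewrite /fixset /= -fty'.
move=> /(inC _ ty_d) Cty; exists (t y) => //; exact: reflK.
Qed.

Lemma nint (t : X -> X) q eps : reflection t -> 0 < eps ->
  exists w, d q w < eps /\ ~ fixset t w.
Proof.
move=> ht eps0; apply: contrapT => hn.
have [_ [_ [intF _]]] := ht.
suff : interior (fixset t) q by rewrite intF.
apply/interior_ballP; exists eps => // z hz; apply: contrapT => nF; apply: hn.
by exists z.
Qed.

Lemma lemA t r c : S t -> reflections_in W r -> r <> t -> C c ->
  connected_component (~` fixset r) (t c) = connected_component (~` fixset r) c.
Proof.
move=> St rr nrt hc.
have [SW _] := hmin; have tr := SW t St; have [Wt ht] := tr; have [Wr hr] := rr.
have [it _] := ht; have [ir _] := hr.
have [p [e e0 [tp hp]]] := GP St.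
have exC : forall eps, 0 < eps -> eps <= e ->
    exists y, [/\ C y, d p y < eps & d p (t y) < eps].
  move=> eps eps0 epse; have [z [hz nFz]] := nint p ht eps0.
  have hz' : d p z < e by exact: lt_le_trans hz epse.
  have dtz : d p (t z) = d p z by have := it p z; rewrite tp.
  case: (hp z hz' nFz) => [Cz|[z' Cz' ez]]; first by exists z; split => //; rewrite dtz.
  have tz : t z = z' by rewrite -ez reflK.
  by exists z'; split => //; [rewrite -tz dtz|rewrite ez].
case: (pselect (r p = p)) => rp.
  exfalso.
  have [y [Cy hy _]] := exC e e0 (lexx e).
  have dz : d p (r (t y)) < e by have := ir (t p) (t y); rewrite it tp rp => ->.
  have Wrt : W (r \o t) by exact: W_comp.
  have Wtr : W (t \o r) by exact: W_comp.
  have hrt : ibij (r \o t) (t \o r) := ibij_comp (refl_ibij hr) (refl_ibij ht).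
  have zin : ((r \o t) @` C) (r (t y)) by exists y.
  have [eta eta0 heta] := (proj1 (open_ballP _) (gC_open Wrt Wtr hrt)) _ zin.
  have eps0 : 0 < Num.min eta (e - d p (r (t y))) by rewrite lt_min eta0 /=; lra.
  have [w [hw nFw]] := nint (r (t y)) ht eps0.
  have e1 : Num.min eta (e - d p (r (t y))) <= eta by rewrite ge_min lexx.
  have e2 : Num.min eta (e - d p (r (t y))) <= e - d p (r (t y)) by rewrite ge_min lexx orbT.
  have dw : d p w < e.
    have := metric_triangle p (r (t y)) w; lra.
  have rtw := heta w (lt_le_trans hw e1).
  case: (hp w dw nFw) => [Cw|tCw].
    have := @gC_meet (r \o t) (t \o r) id id w Wrt Wtr hrt (W_id) (W_id) ibij_id rtw.
    rewrite image_id => /(_ Cw) /(stab Wrt) rt1; apply: nrt.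
    by apply/funext => x; have := congr1 (fun f => f (t x)) rt1; rewrite /= (reflK _ ht).
  have := @gC_meet (r \o t) (t \o r) t t w Wrt Wtr hrt Wt Wt (refl_ibij ht) rtw tCw.
  move=> /(congr1 (fun A => t @` A)); rewrite (img_img _ (refl_ibij ht)) -img_comp.
  have Wtrt : W (t \o (r \o t)) by exact: W_comp.
  move=> /(stab Wtrt) trt1; apply: (refl_not_id c hr).
  apply/funext => x; have := congr1 (fun f => t (f (t x))) trt1.
  by rewrite /= !(reflK _ ht).
case: (@near_avoid p (fun q => q = r)) => [q ->|eta eta0 heta]; first by [].
pose eps := Num.min e eta / 3.
have epsm : Num.min e eta <= e by rewrite ge_min lexx.
have epsm2 : Num.min e eta <= eta by rewrite ge_min lexx orbT.
have m0 : 0 < Num.min e eta by rewrite lt_min e0 eta0.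
have eps0 : 0 < eps by rewrite /eps; lra.
have eps3 : 3 * eps <= eta by rewrite /eps; lra.
have eps3' : 3 * eps <= e by rewrite /eps; lra.
clearbody eps.
have [y [Cy hy hty]] := exC eps eps0 ltac:(lra).
have [g hg] := hgeo y (t y).
have [sy sty] := seg_ends hg.
have segsub : g @` I01 (d y (t y)) `<=` ~` fixset r.
  move=> w hw; have := seg_ball hg hw => hyw.
  have := metric_triangle y p (t y); rewrite (metric_sym y p) => t1.
  have := metric_triangle p y w => t2.
  by apply: (heta r w erefl); lra.
have Cc : connected_component (~` fixset r) c = connected_component (~` fixset r) y.
  by rewrite -(Xplus_cc rr hc) -(Xplus_cc rr Cy).
have tC : connected_component (~` fixset r) (t c) = connected_component (~` fixset r) (t y).
  apply: same_connected_component.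
  have sub : t @` C `<=` connected_component (~` fixset r) (t c).
    apply: connected_component_max; first by exists c.
      by move=> x /(gC_free Wt Wt (refl_ibij ht)); exact: Free_fix.
    exact: gC_conn (refl_ibij ht).
  by apply: sub; exists y.
have sg : connected_component (~` fixset r) y = connected_component (~` fixset r) (t y).
  apply: same_connected_component.
  have sub : g @` I01 (d y (t y)) `<=` connected_component (~` fixset r) y.
    apply: connected_component_max => //; exact: seg_connected hg.
  exact: sub _ sty.
by rewrite tC -sg Cc.
Qed.


Variable T : set (X -> X).
Hypothesis hTS : T `<=` S.

Fixpoint prodw (l : seq (X -> X)) : X -> X := if l is f :: l' then f \o prodw l' else id.
Fixpoint inT (l : seq (X -> X)) : Prop := if l is f :: l' then T f /\ inT l' else True.

Lemma prodw_cat l1 l2 : prodw (l1 ++ l2) = prodw l1 \o prodw l2.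
Proof. by elim: l1 => //= f l1 ->. Qed.

Lemma prodw_rcons l t : prodw (rcons l t) = prodw l \o t.
Proof. by rewrite -cats1 prodw_cat. Qed.

Lemma inT_cat l1 l2 : inT (l1 ++ l2) <-> inT l1 /\ inT l2.
Proof.
elim: l1 => [|f l1 IH] /=; first by split => // -[].
by rewrite IH; split => [[? [? ?]]|[[? ?] ?]].
Qed.

Lemma inT_rev l : inT l -> inT (rev l).
Proof.
elim: l => //= f l IH [Tf hl]; rewrite rev_cons -cats1; apply/inT_cat; split; first exact: IH.
by [].
Qed.

Lemma inT_take k l : inT l -> inT (take k l).
Proof. by move=> hl; have /inT_cat[] : inT (take k l ++ drop k l) by rewrite cat_take_drop. Qed.

Lemma inT_drop k l : inT l -> inT (drop k l).
Proof. by move=> hl; have /inT_cat[] : inT (take k l ++ drop k l) by rewrite cat_take_drop. Qed.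

Lemma inT_nth k l : inT l -> (k < size l)%N -> T (nth id l k).
Proof.
elim: l k => //= f l IH [|k] [Tf hl] //= hk; exact: IH.
Qed.

Lemma T_refl t : T t -> reflections_in W t.
Proof. by move=> Tt; have [SW _] := hmin; apply: SW; exact: hTS. Qed.

Lemma TK t x : T t -> t (t x) = x.
Proof. by move=> /T_refl [_ ht]; exact: reflK. Qed.

Lemma prodwK l x : inT l -> prodw l (prodw (rev l) x) = x.
Proof.
elim: l x => //= f l IH x [Tf hl].
by rewrite rev_cons prodw_rcons /= IH // TK.
Qed.

Lemma prodwK' l x : inT l -> prodw (rev l) (prodw l x) = x.
Proof.
move=> hl; have := @prodwK (rev l) x (inT_rev hl); by rewrite revK.
Qed.

Lemma W_prodw l : inT l -> W (prodw l).
Proof.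
elim: l => [|f l IH] /=; first by move=> _; exact: W_id.
by move=> [Tf hl]; apply: W_comp => //; [case: (T_refl Tf)|exact: IH].
Qed.

Lemma ibij_prodw l : inT l -> ibij (prodw l) (prodw (rev l)).
Proof.
move=> hl; split.
  elim: l hl => [|f l IH] /= hl x y //; have [Tf hl'] := hl.
  have [_ [ir _]] := T_refl Tf.
  by rewrite ir IH.
by split; apply/funext => x /=; [exact: prodwK|exact: prodwK'].
Qed.

Lemma lemAg g g' t r c : W g -> W g' -> ibij g g' -> S t -> reflections_in W r ->
  r <> g \o t \o g' -> C c ->
  connected_component (~` fixset r) (g (t c)) = connected_component (~` fixset r) (g c).
Proof.
move=> Wg Wg' h St rr nrt hc.
have rr' : reflections_in W (g' \o r \o g) := W_conj hW Wg' Wg (ibij_sym h) rr.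
have grg : g \o (g' \o r \o g) \o g' = r.
  by apply/funext => x /=; rewrite !(ibijK1 _ h).
have nrt' : g' \o r \o g <> t by move=> e; apply: nrt; rewrite -grg e.
have key : g @` (~` fixset (g' \o r \o g)) = ~` fixset r.
  by rewrite (img_compl _ h) -(fix_conj _ h) grg.
have := congr1 (fun A => g @` A) (lemA St rr' nrt' hc).
by rewrite /= !(img_cc _ _ h) key.
Qed.

Lemma walk r c : reflections_in W r -> C c -> forall l m, inT m -> inT l ->
  (forall k, (k < size l)%N ->
     r <> prodw (m ++ take k l) \o nth id l k \o prodw (rev (m ++ take k l))) ->
  connected_component (~` fixset r) (prodw (m ++ l) c) =
  connected_component (~` fixset r) (prodw m c).
Proof.
move=> rr hc; elim=> [|t l IH] m hm hl hk; first by rewrite cats0.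
have [Tt hl'] := hl.
have e1 := lemAg (W_prodw hm) (W_prodw (inT_rev hm)) (ibij_prodw hm) (hTS Tt) rr
  ltac:(by have := hk 0%N isT; rewrite /= cats0) hc.
have hm' : inT (rcons m t) by rewrite -cats1; apply/inT_cat.
rewrite -cat_rcons IH //; first by rewrite prodw_rcons /= e1.
move=> k hk'; have := hk k.+1 hk'; by rewrite /= cat_rcons.
Qed.

Lemma noT s : S s -> ~ T s -> forall l, inT l -> s <> prodw l.
Proof.
move=> Ss nTs l; have [n] := ubnP (size l); elim: n l => // n IH l.
rewrite ltnS => hsz hl es.
have [c0 Fc0 Ce] := C_def.
have hc0 : C c0 by rewrite Ce; exact: connected_component_refl.
have [SW _] := hmin.
case: l hsz hl es => [|t1 l'] hsz hl es.
  by have [_ hs] := SW s Ss; exact: (refl_not_id c0 hs).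
have [Tt1 hl'] := hl.
case: (pselect (exists k, (k < size l')%N /\
   t1 = prodw (t1 :: take k l') \o nth id l' k \o prodw (rev (t1 :: take k l')))) =>
   [[k [hk ek]]|nk].
  have hu : inT (take k l') := inT_take k hl'.
  have key : forall x, prodw (take k l') (nth id l' k x) = t1 (prodw (take k l') x).
    move=> x; have := congr1 (fun f => f (t1 (prodw (take k l') x))) ek.
    rewrite /= rev_cons prodw_rcons /= !(TK _ Tt1) prodwK' // => ->.
    by rewrite (TK _ Tt1).
  have hD : inT (drop k.+1 l') := inT_drop k.+1 hl'.
  apply: (IH (take k l' ++ drop k.+1 l')).
  - rewrite size_cat size_take size_drop hk /=.
    by move: hsz => /=; lia.
  - by apply: (proj2 (inT_cat _ _)); split.
  - rewrite es prodw_cat /=; apply/funext => x /=.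
    by rewrite -{1}(cat_take_drop k l') prodw_cat /= (drop_nth id hk) /= key (TK _ Tt1).
have e1 := @walk t1 c0 (T_refl Tt1) hc0 l' [:: t1] (conj Tt1 I) hl'
  ltac:(by move=> k hk e; apply: nk; exists k).
have [_ ht1] := T_refl Tt1.
have e2 := @lemAg id id s t1 c0 (W_id) (W_id) ibij_id Ss (T_refl Tt1)
  ltac:(by move=> e; apply: nTs; have -> : s = t1 by rewrite e) hc0.
move: e1 e2; rewrite es /= => -> e2.
exact: (refl_swap ht1 (Free_fix (T_refl Tt1) Fc0) e2).
Qed.


Lemma gen_word u : gen T u -> exists l, inT l /\ u = prodw l.
Proof.
elim=> {u} [|t Tt|f g _ [l1 [h1 ->]] _ [l2 [h2 ->]]|f g _ [l [hl ->]] fg gf].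
- by exists [::].
- by exists [:: t].
- exists (l1 ++ l2); split; last by rewrite prodw_cat.
  by apply: (proj2 (inT_cat _ _)); split.
- exists (rev l); split; first exact: inT_rev.
  apply/funext => x; have e := congr1 (fun h => h x) fg; rewrite /= in e.
  by rewrite -{2}e prodwK'.
Qed.

Lemma main_inv s c l : S s -> ~ T s -> inT l -> C c ->
  connected_component (~` fixset s) (prodw l c) = connected_component (~` fixset s) c.
Proof.
move=> Ss nTs hl hc; have [SW _] := hmin.
have := @walk s c (SW s Ss) hc l [::] I hl; apply => k hk e.
apply: (noT Ss nTs (l := take k l ++ nth id l k :: rev (take k l))).
  apply: (proj2 (inT_cat _ _)); split; first exact: inT_take.
  by split; [exact: inT_nth|exact/inT_rev/inT_take].
by rewrite prodw_cat e.
Qed.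

Lemma final w w' s : gen T w -> w \o w' = id -> w' \o w = id -> S s -> ~ T s ->
  w @` Xplus C s = Xplus C (w \o s \o w').
Proof.
move=> hw ww' w'w Ss nTs; have [SW _] := hmin.
have genW : forall u, gen T u -> W u.
  move=> u; elim=> [|t Tt|f g _ Wf _ Wg|f g _ Wf fg gf].
  - exact: W_id.
  - by case: (T_refl Tt).
  - exact: W_comp.
  - by rewrite hW; apply: (@gen_inv _ _ _ f) => //; rewrite -hW.
have hw' : gen T w' := gen_inv hw ww' w'w.
have Ww := genW w hw; have Ww' := genW w' hw'.
have [g0 _ [iw _]] := W_inv hW Ww.
have h : ibij w w' := conj iw (conj ww' w'w).
have [c0 Fc0 Ce] := C_def.
have hc0 : C c0 by rewrite Ce; exact: connected_component_refl.
have sr := SW s Ss.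
have sr' := W_conj hW Ww Ww' h sr.
rewrite (Xplus_cc sr hc0) (Xplus_cc sr' hc0) (img_cc _ _ h) (img_compl _ h) -(fix_conj s h).
have [l [hl el]] := gen_word hw'.
have mi := main_inv Ss nTs hl hc0; rewrite -el in mi.
have := congr1 (fun A => w @` A) mi.
by rewrite /= !(img_cc _ _ h) (img_compl _ h) -(fix_conj s h) (ibijK1 _ h) => ->.
Qed.

End Main.


Theorem lemma2p3 (R : realType) (X : metricType R) (W : set (X -> X))
  (C : set X) (S T : set (X -> X)) :
  CAT0 X ->
  reflection_group W ->
  acts_properly W ->
  chamber W C ->
  cocompact_discrete W C ->
  minimal_chamber_walls W C S ->
  T `<=` S ->
  forall w w' : X -> X, gen T w -> w \o w' = id -> w' \o w = id ->
  forall s, S s -> ~ T s ->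
    w @` Xplus C s = Xplus C (w \o s \o w').
Proof.
move=> hcat hW hprop hch hcd hmin hTS w w' hw ww' w'w s Ss nTs.
exact: (final hcat.1 hW hprop hch hcd hmin hTS hw ww' w'w Ss nTs).
Qed.
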